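(* Let $r,c\ge1$, $n=r+c$, $X_1,X_2$ as below, and $1\le K\le 2^{\min(r,c)}$. Let $\varphi$ be uniformly random among permutations of $\{0,1\}^n$ with exactly $K$ $X$-pairs. Any quantum algorithm making $T$ queries to $\varphi$ and $\varphi^{-1}$ that outputs an $X$-pair of $\varphi$ with probability $\epsilon>0$ satisfies $$\epsilon\le\frac{8(T+1)^2K}{2^{\min(r,c)}}.$$
   Context: $X_1\subset\{0,1\}^n$ is the set of strings ending in $0^c$, $X_2\subset\{0,1\}^n$ the set of strings beginning with $0^r$; an $X$-pair of $\varphi$ is $(x,y)\in X_1\times X_2$ with $\varphi(x)=y$. Queries are to the unitaries $O_\varphi:|a\rangle|b\rangle\mapsto|a\rangle|b\oplus\varphi(a)\rangle$ and $O_{\varphi^{-1}}:|a\rangle|b\rangle\mapsto|a\rangle|b\oplus\varphi^{-1}(a)\rangle$; success probability is over $\varphi$ and the algorithm's randomness and measurements. *)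

(* Defs.v *)
From HB Require Import structures.
From mathcomp Require Import all_boot all_order fingroup perm all_algebra.
From mathcomp Require Import complex.
Set Implicit Arguments. Unset Strict Implicit. Unset Printing Implicit Defensive.
Import Order.TTheory GRing.Theory Num.Theory.
Local Open Scope ring_scope.

Definition bs (n : nat) := (n.-tuple bool)%type.

Definition bxor n (x y : bs n) : bs n := [tuple xorb (tnth x i) (tnth y i) | i < n].

Definition inX1 (r c : nat) (x : bs (r + c)) : bool := drop r x == nseq c false.
Definition inX2 (r c : nat) (y : bs (r + c)) : bool := take r y == nseq r false.

Definition Xpair (r c : nat) (phi : {perm bs (r + c)}) (xy : bs (r + c) * bs (r + c)) : bool :=
  [&& inX1 xy.1, inX2 xy.2 & phi xy.1 == xy.2].

Definition numXpairs (r c : nat) (phi : {perm bs (r + c)}) : nat :=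
  #|[set x : bs (r + c) | inX1 x && inX2 (phi x)]|.

(* Computational basis of the full register: control qubit (which oracle),
   query input |a>, query output |b>, and workspace W. *)
Definition basis (n : nat) (W : finType) : finType := (bool * bs n * bs n * W)%type.

Definition op (R : rcfType) (B : finType) := B -> B -> R[i].
Definition state (R : rcfType) (B : finType) := B -> R[i].

Definition apply_op (R : rcfType) (B : finType) (A : op R B) (v : state R B) : state R B :=
  fun x => \sum_(y : B) A x y * v y.

Definition unitary (R : rcfType) (B : finType) (A : op R B) : Prop :=
  forall x y : B, \sum_(z : B) (conjc (A z x)) * A z y = (x == y)%:R.

Definition oracle_map n (W : finType) (phi : {perm bs n}) (x : basis n W) : basis n W :=
  let: (ct, a, b, w) := x in
  (ct, a, bxor b (if ct then (phi^-1)%g a else phi a), w).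

Definition oracle_op (R : rcfType) n (W : finType) (phi : {perm bs n}) : op R (basis n W) :=
  fun x y => (x == oracle_map phi y)%:R.

(* A T-query quantum algorithm with workspace W: start in a basis state,
   apply U_0, query, U_1, query, ..., query, U_T, then measure in the
   computational basis and classically post-process the outcome into a
   candidate pair (x, y). *)
Record qalg (R : rcfType) (n : nat) (W : finType) (T : nat) := QAlg {
  init : basis n W;
  U : nat -> op R (basis n W);
  U_unitary : forall i, (i <= T)%N -> unitary (U i);
  outp : basis n W -> bs n * bs n
}.

Definition delta (R : rcfType) (B : finType) (b0 : B) : state R B :=
  fun x => (x == b0)%:R.

Fixpoint run (R : rcfType) n (W : finType) T (A : qalg R n W T) (phi : {perm bs n}) (k : nat)
  : state R (basis n W) :=
  match k with
  | 0 => apply_op (U A 0) (delta R (init A))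
  | k'.+1 => apply_op (U A k) (apply_op (@oracle_op R n W phi) (run A phi k'))
  end.

Definition sqnorm (R : rcfType) (z : R[i]) : R := complex.Re z ^+ 2 + complex.Im z ^+ 2.

Definition succ_prob (R : rcfType) (r c : nat) (W : finType) T (A : qalg R (r + c) W T)
  (phi : {perm bs (r + c)}) : R :=
  \sum_(x : basis (r + c) W | Xpair phi (outp A x)) sqnorm (run A phi T x).

Definition avg_succ_prob (R : rcfType) (r c K : nat) (W : finType) T (A : qalg R (r + c) W T) : R :=
  (\sum_(phi : {perm bs (r + c)} | numXpairs phi == K) succ_prob A phi)
  / #|[set phi : {perm bs (r + c)} | numXpairs phi == K]|%:R.

(* Main.v *)
Require Import Defs.
From HB Require Import structures.
From mathcomp Require Import all_boot all_order fingroup perm all_algebra.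
From mathcomp Require Import complex ring lra zify.
Import Order.TTheory GRing.Theory Num.Theory.
Local Open Scope ring_scope.
Set Implicit Arguments. Unset Strict Implicit. Unset Printing Implicit Defensive.

Section ComplexPart.
Local Open Scope complex_scope.

Section Cplx.
Variable R : rcfType.

Lemma ReD (u v : R[i]) : complex.Re (u + v) = complex.Re u + complex.Re v.
Proof. by case: u; case: v. Qed.
Lemma ImD (u v : R[i]) : complex.Im (u + v) = complex.Im u + complex.Im v.
Proof. by case: u; case: v. Qed.
Lemma ReN (u : R[i]) : complex.Re (- u) = - complex.Re u.
Proof. by case: u. Qed.
Lemma ImN (u : R[i]) : complex.Im (- u) = - complex.Im u.
Proof. by case: u. Qed.

Lemma sqnorm_ge0 (z : R[i]) : 0 <= sqnorm z.
Proof. by rewrite /sqnorm addr_ge0 // sqr_ge0. Qed.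

Lemma sqnormC (z : R[i]) : (sqnorm z)%:C = z * conjc z.
Proof.
case: z => a b; rewrite /sqnorm /= /GRing.mul /=.
apply/eqP; rewrite eq_complex /=; apply/andP; split; apply/eqP.
  by rewrite !expr2 mulrN opprK.
by rewrite mulrN addrC mulrC subrr.
Qed.

Lemma sqnorm0 : sqnorm (0 : R[i]) = 0.
Proof. by rewrite /sqnorm /= expr0n /= addr0. Qed.
Lemma sqnorm1 : sqnorm (1 : R[i]) = 1.
Proof. by rewrite /sqnorm /= expr1n expr0n /= addr0. Qed.

Lemma sqnormD_k (k : nat) (u v : R[i]) :
  k%:R * sqnorm (u + v) <= k.+1%:R * sqnorm u + (k * k.+1)%:R * sqnorm v.
Proof.
rewrite /sqnorm ReD ImD.
set a := complex.Re u; set b := complex.Re v; set a' := complex.Im u; set b' := complex.Im v.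
rewrite natrM -[k.+1]addn1 natrD.
set K := (k%:R : R).
have h1 : 0 <= (a - K * b) ^+ 2 by apply: sqr_ge0.
have h2 : 0 <= (a' - K * b') ^+ 2 by apply: sqr_ge0.
rewrite -subr_ge0.
have -> : (K + 1%:R) * (a ^+ 2 + a' ^+ 2) + K * (K + 1%:R) * (b ^+ 2 + b' ^+ 2) -
   K * ((a + b) ^+ 2 + (a' + b') ^+ 2) = (a - K * b) ^+ 2 + (a' - K * b') ^+ 2.
  by rewrite /GRing.natmul /=; ring.
by rewrite addr_ge0.
Qed.

Lemma sqnormB_le (u v : R[i]) : sqnorm (u - v) <= 2 * sqnorm u + 2 * sqnorm v.
Proof.
rewrite /sqnorm ReD ImD ReN ImN -subr_ge0.
set a := complex.Re u; set b := complex.Re v; set a' := complex.Im u; set b' := complex.Im v.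
have -> : 2 * (a ^+ 2 + a' ^+ 2) + 2 * (b ^+ 2 + b' ^+ 2) - ((a + - b) ^+ 2 + (a' + - b') ^+ 2)
  = (a + b) ^+ 2 + (a' + b') ^+ 2 by ring.
by rewrite addr_ge0 // sqr_ge0.
Qed.

Lemma sqnorm_le2 (u v : R[i]) : sqnorm u <= 2 * sqnorm v + 2 * sqnorm (u - v).
Proof.
rewrite /sqnorm ReD ImD ReN ImN -subr_ge0.
set a := complex.Re u; set b := complex.Re v; set a' := complex.Im u; set b' := complex.Im v.
have -> : 2 * (b ^+ 2 + b' ^+ 2) + 2 * ((a + - b) ^+ 2 + (a' + - b') ^+ 2) - (a ^+ 2 + a' ^+ 2)
  = (a - 2 * b) ^+ 2 + (a' - 2 * b') ^+ 2 by ring.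
by rewrite addr_ge0 // sqr_ge0.
Qed.

End Cplx.

Section St.
Variable R : rcfType.
Variable B : finType.

Definition nrm2 (v : state R B) : R := \sum_x sqnorm (v x).

Lemma nrm2C (v : state R B) : (nrm2 v)%:C = \sum_x v x * conjc (v x).
Proof. by rewrite /nrm2 rmorph_sum; apply: eq_bigr => x _; apply: sqnormC. Qed.

Lemma nrm2_ge0 v : 0 <= nrm2 v.
Proof. by apply: sumr_ge0 => x _; apply: sqnorm_ge0. Qed.

Lemma unitary_nrm (A : op R B) v : unitary A -> nrm2 (apply_op A v) = nrm2 v.
Proof.
move=> uA; apply: (@complexI R); rewrite !nrm2C /apply_op.
transitivity (\sum_x \sum_y \sum_y' (A x y * v y) * conjc (A x y' * v y')).
  apply: eq_bigr => x _; rewrite rmorph_sum big_distrl /=.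
  by apply: eq_bigr => y _; rewrite big_distrr.
rewrite exchange_big /=.
apply: eq_bigr => y _; rewrite exchange_big /=.
rewrite (bigD1 y) //= [X in _ + X]big1 ?addr0.
  transitivity ((\sum_i conjc (A i y) * A i y) * (v y * conjc (v y))).
    rewrite big_distrl /=; apply: eq_bigr => i _; rewrite rmorphM /=; ring.
  by rewrite uA eqxx mul1r.
move=> y' ny.
transitivity ((\sum_i conjc (A i y') * A i y) * (v y * conjc (v y'))).
  rewrite big_distrl /=; apply: eq_bigr => i _; rewrite rmorphM /=; ring.
by rewrite uA (negbTE ny) mul0r.
Qed.

End St.

Section Orc.
Variable R : rcfType.
Variables (n : nat) (W : finType).
Local Notation B := (basis n W).

Lemma bxorK (b f : bs n) : bxor (bxor b f) f = b.
Proof.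
apply: eq_from_tnth => i; rewrite /bxor !tnth_mktuple.
by case: (tnth b i); case: (tnth f i).
Qed.

Lemma oracle_mapK (phi : {perm bs n}) : involutive (@oracle_map n W phi).
Proof. by case=> [[[ct a] b] w] /=; rewrite bxorK. Qed.

Lemma oracle_map_inj (phi : {perm bs n}) : injective (@oracle_map n W phi).
Proof. exact: inv_inj (oracle_mapK phi). Qed.

Lemma oracle_apply (phi : {perm bs n}) (v : state R B) x :
  apply_op (@oracle_op R n W phi) v x = v (oracle_map phi x).
Proof.
rewrite /apply_op /oracle_op (bigD1 (oracle_map phi x)) //= oracle_mapK eqxx mul1r.
rewrite big1 ?addr0 // => y ny.
case: eqP => [e|]; last by rewrite mul0r.
by move: ny; rewrite e oracle_mapK eqxx.
Qed.

Lemma sum_inv (f : B -> B) (P : pred B) (g : B -> R) : involutive f ->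
  (forall x, P (f x) = P x) ->
  \sum_(x | P x) g (f x) = \sum_(x | P x) g x.
Proof.
move=> fK Pf; rewrite (reindex_inj (inv_inj fK)) /=.
by apply: eq_big => x; rewrite ?Pf ?fK.
Qed.

Lemma nrm2_inv (f : B -> B) (v : state R B) : involutive f ->
  nrm2 (fun x => v (f x)) = nrm2 v.
Proof. by move=> fK; rewrite /nrm2 (sum_inv (P := predT) (fun x => sqnorm (v x)) fK). Qed.

Lemma nrm2_ext (v w : state R B) : (forall x, v x = w x) -> nrm2 v = nrm2 w.
Proof. by move=> h; apply: eq_bigr => x _; rewrite h. Qed.

Lemma nrm2_delta (b0 : B) : nrm2 (delta R b0) = 1.
Proof.
rewrite /nrm2 (bigD1 b0) //= /delta eqxx sqnorm1 big1 ?addr0 // => y ny.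
by rewrite (negbTE ny) sqnorm0.
Qed.

Variable T : nat.
Variable A : qalg R n W T.

Lemma run_nrm (phi : {perm bs n}) k : (k <= T)%N -> nrm2 (run A phi k) = 1.
Proof.
elim: k => [|k IH] hk /=.
  by rewrite unitary_nrm ?nrm2_delta //; apply: U_unitary.
rewrite unitary_nrm; last exact: U_unitary.
rewrite (@nrm2_ext _ (fun x => run A phi k (oracle_map phi x))); last by move=> x; rewrite oracle_apply.
by rewrite nrm2_inv ?IH ?(ltnW hk) //; apply: oracle_mapK.
Qed.

End Orc.

Section Hyb.
Variable R : rcfType.
Variables (n : nat) (W : finType).
Local Notation B := (basis n W).
Variable T : nat.
Variable A : qalg R n W T.
Variables phi phi' : {perm bs n}.

Lemma eqle (x y : R) : x = y -> x <= y. Proof. by move->. Qed.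

Definition Ek k := \sum_x sqnorm (run A phi k x - run A phi' k x).
Definition Dk k := \sum_x sqnorm (run A phi' k (oracle_map phi x) - run A phi' k (oracle_map phi' x)).

Lemma apply_opB (M : op R B) v w x :
  apply_op M v x - apply_op M w x = apply_op M (fun y => v y - w y) x.
Proof. by rewrite /apply_op -sumrB; apply: eq_bigr => y _; rewrite mulrBr. Qed.

Lemma Ek_step k : (k.+1 <= T)%N ->
  Ek k.+1 = \sum_y sqnorm (run A phi k (oracle_map phi y) - run A phi' k (oracle_map phi' y)).
Proof.
move=> hk; rewrite /Ek /=.
transitivity (nrm2 (apply_op (U A k.+1) (fun y => apply_op (@oracle_op R n W phi) (run A phi k) y
   - apply_op (@oracle_op R n W phi') (run A phi' k) y))).
  by apply: eq_bigr => x _; rewrite apply_opB.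
rewrite unitary_nrm; last exact: U_unitary.
by apply: eq_bigr => y _; rewrite !oracle_apply.
Qed.

Lemma Dk_ge0 k : 0 <= Dk k.
Proof. by apply: sumr_ge0 => x _; apply: sqnorm_ge0. Qed.
Lemma Ek_ge0 k : 0 <= Ek k.
Proof. by apply: sumr_ge0 => x _; apply: sqnorm_ge0. Qed.

Lemma hybrid k : (k <= T)%N -> Ek k <= k%:R * \sum_(j < k) Dk j.
Proof.
elim: k => [|k IH] hk.
  by rewrite /Ek big1 ?mul0r // => x _; rewrite subrr sqnorm0.
rewrite Ek_step // big_ord_recr /=.
case: k IH hk => [|k] IH hk.
  rewrite big_ord0 add0r mul1r /Dk; apply: eqle; apply: eq_bigr => y _.
  have -> : run A phi 0 (oracle_map phi y) = run A phi' 0 (oracle_map phi y) by [].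
  by [].
set S := \sum_(i < k.+1) Dk i.
have IH' := IH (ltnW hk).
set k1 := k.+1 in IH' *.
have key : k1%:R * (\sum_y sqnorm (run A phi k1 (oracle_map phi y) - run A phi' k1 (oracle_map phi' y)))
   <= k1.+1%:R * Ek k1 + (k1 * k1.+1)%:R * Dk k1.
  rewrite /Ek /Dk mulr_sumr -(sum_inv (P := predT) (fun x => sqnorm (run A phi k1 x - run A phi' k1 x)) (oracle_mapK phi)) //.
  rewrite !mulr_sumr -big_split /=; apply: ler_sum => y _.
  have -> : run A phi k1 (oracle_map phi y) - run A phi' k1 (oracle_map phi' y) =
    (run A phi k1 (oracle_map phi y) - run A phi' k1 (oracle_map phi y)) +
    (run A phi' k1 (oracle_map phi y) - run A phi' k1 (oracle_map phi' y)) by ring.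
  exact: sqnormD_k.
have k1p : (0 : R) < k1%:R by rewrite ltr0n.
rewrite -(ler_pM2l k1p); apply: (le_trans key).
have := Dk_ge0 k1; move: IH'; set e := Ek k1; set d := Dk k1.
rewrite natrM -[k1.+1]addn1 natrD => h1 h2.
set K := (k1%:R : R).
have h3 : (K + 1) * e <= (K + 1) * (K * S) by rewrite ler_pM2l // ltr_wpDl ?ler0n.
apply: (le_trans (lerD h3 (lexx _))).
apply: eqle; ring.
Qed.

End Hyb.

Section Fin.
Variable R : rcfType.
Variables (n : nat) (W : finType).
Local Notation B := (basis n W).
Variable T : nat.
Variable A : qalg R n W T.
Variables phi phi' : {perm bs n}.
Variable cs : bool -> bs n -> bool.
Definition csb (x : B) := cs x.1.1.1 x.1.1.2.
Hypothesis hcs : forall x : B, ~~ csb x -> oracle_map phi x = oracle_map phi' x.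

Lemma csb_map (f : {perm bs n}) x : csb (oracle_map f x) = csb x.
Proof. by case: x => [[[ct a] b] w]. Qed.

Definition Wk k := \sum_(x | csb x) sqnorm (run A phi' k x).

Lemma Dk_bound k : Dk A phi phi' k <= 4 * Wk k.
Proof.
rewrite /Dk (bigID csb) /= [X in _ + X]big1 ?addr0; last first.
  by move=> x /hcs ->; rewrite subrr sqnorm0.
have -> : (4 : R) * Wk k = \sum_(x | csb x) (2 * sqnorm (run A phi' k (oracle_map phi x)) +
    2 * sqnorm (run A phi' k (oracle_map phi' x))).
  rewrite big_split /= -!mulr_sumr.
  rewrite (sum_inv (fun x => sqnorm (run A phi' k x)) (oracle_mapK phi)); last exact: csb_map.
  rewrite (sum_inv (fun x => sqnorm (run A phi' k x)) (oracle_mapK phi')); last exact: csb_map.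
  by rewrite -mulrDl /Wk; congr (_ * _); rewrite -natrD.
by apply: ler_sum => x _; apply: sqnormB_le.
Qed.

Definition Pout (f : {perm bs n}) (o : bs n * bs n) :=
  \sum_(b | outp A b == o) sqnorm (run A f T b).

Lemma Pout_le o : Pout phi o <= 2 * Pout phi' o + 8 * T%:R * \sum_(j < T) Wk j.
Proof.
have h1 : Pout phi o <= 2 * Pout phi' o + 2 * Ek A phi phi' T.
  rewrite /Pout /Ek !mulr_sumr.
  apply: (le_trans (y := \sum_(b | outp A b == o) (2 * sqnorm (run A phi' T b) +
      2 * sqnorm (run A phi T b - run A phi' T b)))).
    by apply: ler_sum => b _; apply: sqnorm_le2.
  rewrite big_split /= lerD2l [X in _ <= X](bigID (fun b => outp A b == o)) /= lerDl.
  by apply: sumr_ge0 => b _; rewrite mulr_ge0 // sqnorm_ge0.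
apply: (le_trans h1); rewrite lerD2l.
have h2 := hybrid A phi phi' (leqnn T).
have h3 : \sum_(j < T) Dk A phi phi' j <= 4 * \sum_(j < T) Wk j.
  by rewrite mulr_sumr; apply: ler_sum => j _; apply: Dk_bound.
have h4 : Ek A phi phi' T <= T%:R * (4 * \sum_(j < T) Wk j).
  by apply: (le_trans h2); rewrite ler_wpM2l ?ler0n.
have -> : (8 : R) * T%:R * \sum_(j < T) Wk j = 2 * (T%:R * (4 * \sum_(j < T) Wk j)).
  by ring.
by rewrite ler_wpM2l.
Qed.

End Fin.

End ComplexPart.

Lemma sum_constP (R : realFieldType) (I : finType) (P : pred I) (c : R) :
  \sum_(z | P z) c = #|P|%:R * c.
Proof. by rewrite mulr_natl -sumr_const. Qed.

Section Gen.
Variable R : realFieldType.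
Variable I : finType.

Lemma sum_pair_le (f : I -> R) (P : I -> I -> bool) (P1 P2 : pred I) (M : nat) :
  (forall a, 0 <= f a) -> (forall x z, P x z -> P1 x && P2 z) ->
  (forall z, P2 z -> ~~ P1 z) -> (#|P1| <= M)%N -> (#|P2| <= M)%N ->
  \sum_x \sum_z (if P x z then f x + f z else 0) <= M%:R * \sum_a f a.
Proof.
move=> f0 hP h12 c1 c2.
apply: (le_trans (y := \sum_(x | P1 x) \sum_(z | P2 z) (f x + f z))).
  rewrite [X in _ <= X]big_mkcond /=; apply: ler_sum => x _.
  case P1x: (P1 x).
    rewrite [X in _ <= X]big_mkcond /=; apply: ler_sum => z _.
    case Pxz: (P x z).
      by move: (hP _ _ Pxz) => /andP[_ ->].
    by case: (P2 z); rewrite // addr_ge0.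
  rewrite big1 // => z _; case Pxz: (P x z) => //.
  by move: (hP _ _ Pxz); rewrite P1x.
have e1 : \sum_(x | P1 x) \sum_(z | P2 z) (f x + f z) =
   #|P2|%:R * \sum_(x | P1 x) f x + #|P1|%:R * \sum_(z | P2 z) f z.
  rewrite (eq_bigr (fun x => #|P2|%:R * f x + \sum_(z | P2 z) f z)); last first.
    by move=> x _; rewrite big_split /= sum_constP.
  by rewrite big_split /= sum_constP -mulr_sumr.
rewrite e1.
have S1 : 0 <= \sum_(x | P1 x) f x by apply: sumr_ge0.
have S2 : 0 <= \sum_(x | P2 x) f x by apply: sumr_ge0.
apply: (le_trans (y := M%:R * \sum_(x | P1 x) f x + M%:R * \sum_(z | P2 z) f z)).
  by apply: lerD; apply: ler_wpM2r; rewrite // ler_nat.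
rewrite -mulrDr ler_wpM2l ?ler0n // (bigID P1 predT) /= lerD2l.
rewrite [X in _ <= X]big_mkcond [X in X <= _]big_mkcond /=; apply: ler_sum => z _.
case P2z: (P2 z); last by case: (~~ P1 z).
by rewrite h12.
Qed.

End Gen.

Section QB.
Variable R : rcfType.
Variables (n : nat) (W : finType).
Local Notation B := (basis n W).
Variable T : nat.
Variable A : qalg R n W T.
Variable f : {perm bs n}.

Definition csxz (x z : bs n) : bool -> bs n -> bool :=
  fun ct a => if ct then (a == f x) || (a == f z) else (a == x) || (a == z).

Definition gp (a : bs n) (b : B) : bool := if b.1.1.1 then b.1.1.2 == f a else b.1.1.2 == a.
Definition gg j a := \sum_(b | gp a b) sqnorm (run A f j b).

Lemma gg_ge0 j a : 0 <= gg j a.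
Proof. by apply: sumr_ge0 => b _; apply: sqnorm_ge0. Qed.

Lemma W_split j x z : Wk A f (csxz x z) j <= gg j x + gg j z.
Proof.
rewrite /Wk /gg.
apply: (le_trans (y := \sum_b ((if gp x b then sqnorm (run A f j b) else 0) +
   (if gp z b then sqnorm (run A f j b) else 0)))); last by rewrite big_split /= -!big_mkcond.
rewrite big_mkcond /=; apply: ler_sum => b _.
have sq0 := sqnorm_ge0 (run A f j b).
rewrite /csb /csxz /gp.
case: (b.1.1.1); case: (_ == _); case: (_ == _) => //=;
  by rewrite ?addr0 ?add0r ?lerDl ?lexx.
Qed.



Lemma sum_perm1 (y : bs n) (F : R) (h : {perm bs n}) :
  \sum_a (if y == h a then F else 0) = F.
Proof.
rewrite (reindex_inj (@perm_inj _ (h^-1)%g)) /=.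
rewrite (bigD1 y) //= permKV eqxx big1 ?addr0 // => a na.
by rewrite permKV eq_sym (negbTE na).
Qed.

Lemma gg_sum j : \sum_a gg j a = nrm2 (run A f j).
Proof.
rewrite /gg /nrm2.
rewrite (eq_bigr (fun a => \sum_b (if gp a b then sqnorm (run A f j b) else 0))); last first.
  by move=> a _; rewrite big_mkcond.
rewrite exchange_big /=; apply: eq_bigr => b _.
rewrite /gp; case: (b.1.1.1).
  by rewrite (sum_perm1 _ _ f).
by rewrite -[RHS](sum_perm1 b.1.1.2 _ 1%g); apply: eq_bigr => a _; rewrite perm1.
Qed.

Lemma Pout_sum : \sum_x \sum_z Pout A f (x, f z) = nrm2 (run A f T).
Proof.
rewrite /Pout /nrm2.
rewrite (eq_bigr (fun x => \sum_z \sum_b (if outp A b == (x, f z) then sqnorm (run A f T b) else 0))); last first.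
  by move=> x _; apply: eq_bigr => z _; rewrite big_mkcond.
rewrite (eq_bigr (fun x => \sum_b \sum_z (if outp A b == (x, f z) then sqnorm (run A f T b) else 0))); last first.
  by move=> x _; rewrite exchange_big.
rewrite exchange_big /=; apply: eq_bigr => b _.
case: (outp A b) => o1 o2.
rewrite (bigD1 o1) //= [X in _ + X]big1 ?addr0.
  rewrite (eq_bigr (fun z => if o2 == f z then sqnorm (run A f T b) else 0)).
    by rewrite sum_perm1.
  by move=> z _; rewrite xpair_eqE eqxx.
move=> x nx; apply: big1 => z _.
by rewrite xpair_eqE eq_sym (negbTE nx).
Qed.


Lemma if_split (c : bool) (a b : R) : (if c then a + b else 0) = (if c then a else 0) + (if c then b else 0).
Proof. by case: c; rewrite ?addr0. Qed.

Lemma quantum_bound (P : bs n -> bs n -> bool) (P1 P2 : pred (bs n)) (M : nat) :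
  (forall x z, P x z -> P1 x && P2 z) -> (forall z, P2 z -> ~~ P1 z) ->
  (#|P1| <= M)%N -> (#|P2| <= M)%N ->
  \sum_x \sum_z (if P x z then 2 * Pout A f (x, f z) + 8 * T%:R * \sum_(j < T) Wk A f (csxz x z) j else 0)
  <= 2 + 8 * T%:R * T%:R * M%:R.
Proof.
move=> hP h12 c1 c2.
rewrite (eq_bigr (fun x => \sum_z (if P x z then 2 * Pout A f (x, f z) else 0) +
   \sum_z (if P x z then 8 * T%:R * \sum_(j < T) Wk A f (csxz x z) j else 0))); last first.
  by move=> x _; rewrite -big_split /=; apply: eq_bigr => z _; rewrite if_split.
rewrite big_split /=; apply: lerD.
  apply: (le_trans (y := \sum_x \sum_z 2 * Pout A f (x, f z))).
    apply: ler_sum => x _; apply: ler_sum => z _.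
    case: (P x z) => //; rewrite mulr_ge0 //; apply: sumr_ge0 => b _; apply: sqnorm_ge0.
  rewrite (eq_bigr (fun x => 2 * \sum_z Pout A f (x, f z))); last by move=> x _; rewrite mulr_sumr.
  by rewrite -mulr_sumr Pout_sum run_nrm // mulr1.
have c8 : (0 : R) <= 8 * T%:R by rewrite mulr_ge0 ?ler0n.
apply: (le_trans (y := \sum_x \sum_z (8 * T%:R * \sum_(j < T) (if P x z then gg j x + gg j z else 0)))).
  apply: ler_sum => x _; apply: ler_sum => z _.
  case: (P x z).
    by apply: ler_wpM2l => //; apply: ler_sum => j _; apply: W_split.
  by rewrite big1 ?mulr0.
rewrite (eq_bigr (fun x => 8 * T%:R * \sum_(j < T) \sum_z (if P x z then gg j x + gg j z else 0))); last first.
  by move=> x _; rewrite -mulr_sumr exchange_big.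
rewrite -mulr_sumr exchange_big /= -[X in _ <= X]mulrA ler_wpM2l //.
apply: (le_trans (y := \sum_(j < T) M%:R * \sum_a gg j a)).
  apply: ler_sum => j _; apply: (@sum_pair_le _ _ _ _ P1 P2) => // a; exact: gg_ge0.
rewrite (eq_bigr (fun _ => M%:R)); last first.
  by move=> j _; rewrite gg_sum run_nrm ?mulr1 // ltnW.
by rewrite sumr_const card_ord mulr_natl.
Qed.

End QB.

Lemma hcs_tau (n : nat) (W : finType) (f : {perm bs n}) (x z : bs n) (b : basis n W) :
  ~~ csb (csxz f x z) b -> oracle_map (tperm x z * f)%g b = oracle_map f b.
Proof.
case: b => [[[ct a] bb] w]; rewrite /csb /csxz /=.
case: ct => /norP [na1 na2] /=.
  rewrite invMg tpermV permM tpermD //.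
    by apply: contra na1 => /eqP ->; rewrite permKV.
  by apply: contra na2 => /eqP ->; rewrite permKV.
by rewrite permM tpermD // eq_sym.
Qed.

Section Comb.
Variables r c : nat.
Local Notation n := (r + c).
Local Notation X1 := (@inX1 r c).
Local Notation X2 := (@inX2 r c).
Local Notation PT := {perm bs n}.

Definition Tk (f : PT) x z := [&& X1 x, X2 (f x), ~~ X1 z & ~~ X2 (f z)].
Definition Tp (f : PT) x z := [&& X1 x, ~~ X2 (f x), ~~ X1 z & X2 (f z)].

Lemma Tk_tau f x z : Tk (tperm x z * f)%g x z = Tp f x z.
Proof.
rewrite /Tk /Tp !permM tpermL tpermR.
by case: (X1 x); case: (X1 z); case: (X2 (f x)); case: (X2 (f z)).
Qed.

Lemma numX_tau f x z : Tp f x z -> numXpairs (tperm x z * f)%g = (numXpairs f).+1.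
Proof.
case/and4P=> x1 nx2 nz1 z2.
have xz : x != z by apply: contraTneq x1 => ->.
rewrite /numXpairs.
have -> : [set a | X1 a && X2 ((tperm x z * f)%g a)] = x |: [set a | X1 a && X2 (f a)].
  apply/setP => a; rewrite !inE permM.
  case: (eqVneq a x) => [->|ax]; first by rewrite tpermL x1 z2.
  case: (eqVneq a z) => [->|az]; first by rewrite tpermR (negbTE nz1).
  by rewrite tpermD // eq_sym.
by rewrite cardsU1 inE x1 (negbTE nx2).
Qed.

Lemma cond_tau (K : nat) f x z : (0 < K)%N ->
  (numXpairs (tperm x z * f)%g == K) && Tk (tperm x z * f)%g x z = (numXpairs f == K.-1) && Tp f x z.
Proof.
move=> K0; rewrite Tk_tau.
case T: (Tp f x z); rewrite ?andbF ?andbT //.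
by rewrite numX_tau //; case: K K0.
Qed.

Variable R : realFieldType.

Lemma swap_sum (K : nat) (G : PT -> bs n -> bs n -> R) : (0 < K)%N ->
  \sum_f (if numXpairs f == K then \sum_x \sum_z (if Tk f x z then G f x z else 0) else 0)
  = \sum_f (if numXpairs f == K.-1 then \sum_x \sum_z (if Tp f x z then G (tperm x z * f)%g x z else 0) else 0).
Proof.
move=> K0.
have E (C : PT -> bool) (D : PT -> bs n -> bs n -> bool) (H : PT -> bs n -> bs n -> R) :
  \sum_f (if C f then \sum_x \sum_z (if D f x z then H f x z else 0) else 0) =
  \sum_x \sum_z \sum_f (if C f && D f x z then H f x z else 0).
  rewrite (eq_bigr (fun f => \sum_x \sum_z (if C f && D f x z then H f x z else 0))); last first.
    move=> f _; case: (C f) => //=; by rewrite big1 // => x _; rewrite big1.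
  rewrite exchange_big /=; apply: eq_bigr => x _; by rewrite exchange_big.
rewrite !E; apply: eq_bigr => x _; apply: eq_bigr => z _.
rewrite (reindex_inj (mulgI (tperm x z))) /=.
by apply: eq_bigr => f _; rewrite cond_tau.
Qed.

End Comb.

Section Cnt.
Variables r c : nat.
Local Notation n := (r + c).
Local Notation X1 := (@inX1 r c).
Local Notation X2 := (@inX2 r c).
Local Notation PT := {perm bs n}.
Definition S1 := [set x : bs n | X1 x].
Definition S2 := [set x : bs n | X2 x].

Lemma pre2 (f : PT) : #|[set z | X2 (f z)]| = #|S2|.
Proof.
rewrite -(card_preimset S2 (@perm_inj _ f)); apply: eq_card => z.
by rewrite !inE.
Qed.

Lemma cnt_Z (f : PT) : (#|[set z | ~~ X1 z && ~~ X2 (f z)]| + #|S1| + #|S2| = #|{: bs n}| + numXpairs f)%N.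
Proof.
have h1 := cardsUI S1 [set z | X2 (f z)].
have h2 := cardsC (S1 :|: [set z | X2 (f z)]).
have e1 : [set z | ~~ X1 z && ~~ X2 (f z)] = ~: (S1 :|: [set z | X2 (f z)]).
  by apply/setP => z; rewrite !inE negb_or.
have e2 : S1 :&: [set z | X2 (f z)] = [set x | X1 x && X2 (f x)].
  by apply/setP => z; rewrite !inE.
rewrite /numXpairs -e2 e1 -(pre2 f) -addnA -h1 -h2 addnA; congr (_ + _)%N; apply: addnC.
Qed.

Lemma cnt_x (f : PT) : (#|[set x | X1 x && ~~ X2 (f x)]| + numXpairs f = #|S1|)%N.
Proof.
rewrite -(cardsID [set z | X2 (f z)] S1) addnC /numXpairs; congr (_ + _)%N;
  apply: eq_card => z; rewrite !inE; by case: (X1 z); case: (X2 (f z)).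
Qed.

Lemma cnt_z (f : PT) : (#|[set z | ~~ X1 z && X2 (f z)]| + numXpairs f = #|S2|)%N.
Proof.
rewrite -(pre2 f) -(cardsID S1 [set z | X2 (f z)]) addnC /numXpairs; congr (_ + _)%N;
  apply: eq_card => z; rewrite !inE; by case: (X1 z); case: (X2 (f z)).
Qed.

End Cnt.

Lemma prod_sum (R : realFieldType) (I J : finType) (P : pred I) (Q : pred J) (g : I -> R) :
  \sum_x \sum_z (if P x && Q z then g x else 0) = #|Q|%:R * \sum_(x | P x) g x.
Proof.
rewrite mulr_sumr [RHS]big_mkcond /=; apply: eq_bigr => x _.
case: (P x) => /=; last by rewrite big1 ?mulr0.
by rewrite -big_mkcond sum_constP.
Qed.

Section Succ.
Variable R : rcfType.
Variables r c : nat.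
Local Notation n := (r + c).
Local Notation X1 := (@inX1 r c).
Local Notation X2 := (@inX2 r c).
Variables (W : finType) (T : nat) (A : qalg R n W T).

Lemma succ_dec (f : {perm bs n}) :
  succ_prob A f = \sum_(x | X1 x && X2 (f x)) Pout A f (x, f x).
Proof.
rewrite /succ_prob /Pout.
rewrite (eq_bigr (fun x => \sum_b (if outp A b == (x, f x) then sqnorm (run A f T b) else 0))); last first.
  by move=> x _; rewrite big_mkcond.
rewrite [LHS]big_mkcond [RHS]big_mkcond /=.
rewrite [RHS](eq_bigr (fun x => \sum_b (if (X1 x && X2 (f x)) && (outp A b == (x, f x)) then sqnorm (run A f T b) else 0))); last first.
  by move=> x _; case: (X1 x && X2 (f x)) => //=; rewrite big1.
rewrite [RHS]exchange_big /=; apply: eq_bigr => b _.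
case E: (outp A b) => [o1 o2].
rewrite [RHS](bigD1 o1) //= [X in _ = _ + X]big1 ?addr0; last first.
  by move=> x nx; rewrite xpair_eqE eq_sym (negbTE nx) /= andbF.
rewrite /Xpair /= xpair_eqE eqxx /= [o2 == _]eq_sym.
by case: eqP => [->|]; rewrite ?andbT ?andbF // andbT.
Qed.

End Succ.

Section Sz.
Variables r c : nat.

Lemma cardS1_le : (#|S1 r c| <= 2 ^ r)%N.
Proof.
have inj : {in S1 r c &, injective (fun x : bs (r + c) => take_tuple r x)}.
  move=> x y; rewrite !inE /inX1 => /eqP hx /eqP hy /(congr1 val) /= ht.
  by apply: val_inj; rewrite /= -(cat_take_drop r x) -(cat_take_drop r y) ht hx hy.
rewrite -(card_in_imset inj).
apply: (leq_trans (subset_leq_card (subsetT _))).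
rewrite cardsT card_tuple card_bool.
by have -> : minn r (r + c) = r by apply/minn_idPl; rewrite leq_addr.
Qed.

Lemma cardS1_ge : (2 ^ r <= #|S1 r c|)%N.
Proof.
pose g := fun t : r.-tuple bool => [tuple of t ++ nseq c false] : bs (r + c).
have inj : injective g.
  move=> t1 t2 /(congr1 (fun x : bs (r + c) => take r x)) /=.
  rewrite !take_size_cat ?size_tuple // => h; exact: val_inj.
rewrite -{1}(card_bool) -card_tuple -cardsT -(card_imset _ inj).
apply: subset_leq_card; apply/subsetP => x /imsetP [t _ ->].
by rewrite inE /inX1 /= drop_size_cat ?size_tuple.
Qed.

Lemma cardS2_le : (#|S2 r c| <= 2 ^ c)%N.
Proof.
have inj : {in S2 r c &, injective (fun x : bs (r + c) => drop_tuple r x)}.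
  move=> x y; rewrite !inE /inX2 => /eqP hx /eqP hy /(congr1 val) /= ht.
  by apply: val_inj; rewrite /= -(cat_take_drop r x) -(cat_take_drop r y) ht hx hy.
rewrite -(card_in_imset inj).
apply: (leq_trans (subset_leq_card (subsetT _))).
rewrite cardsT card_tuple card_bool.
by have -> : (r + c - r = c)%N by rewrite addKn.
Qed.

Lemma cardS2_ge : (2 ^ c <= #|S2 r c|)%N.
Proof.
pose g := fun t : c.-tuple bool => [tuple of nseq r false ++ t] : bs (r + c).
have inj : injective g.
  move=> t1 t2 /(congr1 (fun x : bs (r + c) => drop r x)) /=.
  rewrite !drop_size_cat ?size_nseq // => h; exact: val_inj.
rewrite -{1}(card_bool) -card_tuple -cardsT -(card_imset _ inj).
apply: subset_leq_card; apply/subsetP => x /imsetP [t _ ->].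
by rewrite inE /inX2 /= take_size_cat ?size_nseq.
Qed.

Lemma cardN : #|{: bs (r + c)}| = (2 ^ (r + c))%N.
Proof. by rewrite card_tuple card_bool. Qed.

End Sz.

Lemma sum_if_const (R : realFieldType) (I : finType) (P : pred I) (a : R) :
  \sum_f (if P f then a else 0) = #|[set f | P f]|%:R * a.
Proof.
rewrite -big_mkcond sum_constP; congr (_%:R * _); apply: eq_card => f; by rewrite inE.
Qed.

Section Main.
Variable R : rcfType.
Variables r c K : nat.
Local Notation n := (r + c).
Local Notation X1 := (@inX1 r c).
Local Notation X2 := (@inX2 r c).
Variables (W : finType) (T : nat) (A : qalg R n W T).
Variable Z : nat.
Hypothesis K0 : (0 < K)%N.
Hypothesis hZ : forall f : {perm bs n}, numXpairs f == K -> #|[set z | ~~ X1 z && ~~ X2 (f z)]| = Z.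

Lemma step_main :
  Z%:R * \sum_(f | numXpairs f == K) succ_prob A f <=
  #|[set f : {perm bs n} | numXpairs f == K.-1]|%:R * (2 + 8 * T%:R * T%:R * (maxn #|S1 r c| #|S2 r c|)%:R).
Proof.
rewrite big_mkcond mulr_sumr.
have e1 : \sum_f Z%:R * (if numXpairs f == K then succ_prob A f else 0) =
   \sum_f (if numXpairs f == K then \sum_x \sum_z (if Tk f x z then Pout A f (x, f x) else 0) else 0).
  apply: eq_bigr => f _; case: eqP => hf; last by rewrite mulr0.
  rewrite (eq_bigr (fun x => \sum_z (if (X1 x && X2 (f x)) && (~~ X1 z && ~~ X2 (f z)) then Pout A f (x, f x) else 0))); last first.
    by move=> x _; apply: eq_bigr => z _; rewrite /Tk !andbA.
  rewrite prod_sum succ_dec; congr (_ * _); rewrite -(hZ (f := f)); last by apply/eqP.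
  by congr (_%:R); apply: eq_card => z; rewrite inE.
rewrite e1 (@swap_sum r c R K (fun f x z => Pout A f (x, f x))) // -sum_if_const.
apply: ler_sum => f _; case: (numXpairs f == K.-1) => //.
apply: le_trans (quantum_bound A f (P := Tp f) (P1 := X1) (P2 := fun z => ~~ X1 z && X2 (f z))
   (M := maxn #|S1 r c| #|S2 r c|) _ _ _ _).
- apply: ler_sum => x _; apply: ler_sum => z _.
  case: (Tp f x z) => //.
  rewrite permM tpermL; apply: Pout_le => b; exact: hcs_tau.
- by move=> x z /and4P [-> _ -> ->].
- by move=> z /andP [].
- apply: leq_trans (leq_maxl _ _); apply: eq_leq; apply: eq_card => x; by rewrite inE.
- apply: leq_trans (leq_maxr _ _); rewrite -(cnt_z f).
  apply: leq_trans (leq_addr _ _); apply: eq_leq; apply: eq_card => x; by rewrite inE.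
Qed.


Lemma step_count :
  Z%:R * K%:R * #|[set f : {perm bs n} | numXpairs f == K]|%:R =
  #|[set f : {perm bs n} | numXpairs f == K.-1]|%:R * ((#|S2 r c| - K.-1)%:R * (#|S1 r c| - K.-1)%:R) :> R.
Proof.
have h := @swap_sum r c R K (fun _ _ _ => 1) K0.
rewrite mulrC -sum_if_const -sum_if_const.
transitivity (\sum_(f : {perm bs n}) (if numXpairs f == K then \sum_x \sum_z (if @Tk r c f x z then (1 : R) else 0) else 0)).
  apply: eq_bigr => f _; case: eqP => hf //.
  rewrite (eq_bigr (fun x => \sum_z (if (X1 x && X2 (f x)) && (~~ X1 z && ~~ X2 (f z)) then (1 : R) else 0))); last first.
    by move=> x _; apply: eq_bigr => z _; rewrite /Tk !andbA.
  rewrite prod_sum sum_constP mulr1 -(hZ (f := f)); last by apply/eqP.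
  rewrite -natrM -natrM; congr (_%:R); congr (_ * _)%N.
    by apply: eq_card => z; rewrite inE.
  by rewrite -hf /numXpairs; apply: eq_card => z; rewrite inE.
rewrite h; apply: eq_bigr => f _; case: eqP => hf //.
rewrite (eq_bigr (fun x => \sum_z (if (X1 x && ~~ X2 (f x)) && (~~ X1 z && X2 (f z)) then (1 : R) else 0))); last first.
  by move=> x _; apply: eq_bigr => z _; rewrite /Tp !andbA.
rewrite prod_sum sum_constP mulr1 -hf -(cnt_x f) -(cnt_z f) !addnK.
by congr (_%:R * _%:R); apply: eq_card => z; rewrite inE.
Qed.

End Main.

Lemma final_alg (R : realFieldType) (Sv d d1 Zr C a m k B : R) : 0 < Zr -> 0 < a -> 0 < m -> 0 <= d1 -> 0 <= k -> 0 <= d ->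
 Zr * Sv <= d1 * C -> Zr * k * d = d1 * a -> m * C <= B * a -> Sv * m <= B * k * d.
Proof.
move=> Z0 a0 m0 d10 k0 d0 h1 h2 h3.
have h4 : Zr * Sv * (m * a) <= d1 * C * (m * a) by rewrite ler_wpM2r // mulr_ge0 // ltW.
have h5 : d1 * C * (m * a) = (Zr * k * d) * (m * C) by rewrite h2; ring.
have h6 : (Zr * k * d) * (m * C) <= (Zr * k * d) * (B * a) by rewrite ler_wpM2l // !mulr_ge0 // ltW.
have h7 : (Zr * a) * (Sv * m) <= (Zr * a) * (B * k * d).
  have -> : (Zr * a) * (Sv * m) = Zr * Sv * (m * a) by ring.
  have -> : (Zr * a) * (B * k * d) = (Zr * k * d) * (B * a) by ring.
  by apply: (le_trans h4); rewrite h5.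
by rewrite -(ler_pM2l (mulr_gt0 Z0 a0)).
Qed.

Lemma arith (R : realFieldType) (P Q Kr t M m : R) :
  m <= P -> m <= Q -> P <= M -> Q <= M -> (P = M \/ Q = M) -> 8 * Kr * (t + 1) ^+ 2 < m -> 1 <= Kr -> 0 <= t ->
  m * (2 + 8 * t * t * M) <= 8 * (t + 1) ^+ 2 * ((Q - Kr + 1) * (P - Kr + 1)).
Proof.
move=> mP mQ PM QM hPQ hK K1 t0.
have t1 : 1 <= (t + 1) ^+ 2 by nra.
have Km : Kr < m by nra.
have xy : m * M - 2 * Kr * M <= (Q - Kr) * (P - Kr).
  case: hPQ => <-.
    have : (P - Kr) * (m - Kr) <= (P - Kr) * (Q - Kr) by rewrite ler_wpM2l; lra.
    nra.
  have : (Q - Kr) * (m - Kr) <= (Q - Kr) * (P - Kr) by rewrite ler_wpM2l; lra.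
  nra.
have xy1 : (Q - Kr) * (P - Kr) <= (Q - Kr + 1) * (P - Kr + 1) by nra.
have s1 : 8 * (t + 1) ^+ 2 * (m * M - 2 * Kr * M) <= 8 * (t + 1) ^+ 2 * ((Q - Kr + 1) * (P - Kr + 1)).
  apply: ler_wpM2l; [nra|lra].
apply: le_trans s1.
have M8 : 8 <= M by nra.
have h2 : 16 * Kr * (t + 1) ^+ 2 * M <= 2 * m * M by nra.
have m0 : 0 < m by nra.
have h3 : 2 * m <= 6 * (m * M) by nra.
have h4 : 0 <= 16 * t * (m * M) by apply: mulr_ge0; nra.
have -> : 8 * (t + 1) ^+ 2 * (m * M - 2 * Kr * M) = 8 * t * t * (m * M) + 16 * t * (m * M) + 8 * (m * M) - 16 * Kr * (t + 1) ^+ 2 * M by ring.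
have -> : m * (2 + 8 * t * t * M) = 2 * m + 8 * t * t * (m * M) by ring.
lra.
Qed.

Lemma succ_le1 (R : rcfType) (r c : nat) (W : finType) (T : nat) (A : qalg R (r + c) W T) f :
  succ_prob A f <= 1.
Proof.
rewrite /succ_prob -(run_nrm A f (leqnn T)) /nrm2.
rewrite [X in _ <= X](bigID (fun x => Xpair f (outp A x))) /= lerDl.
by apply: sumr_ge0 => x _; apply: sqnorm_ge0.
Qed.

Lemma pow_sum (r c : nat) : (0 < r)%N -> (0 < c)%N -> (2 ^ r + 2 ^ c <= 2 ^ (r + c))%N.
Proof.
move=> hr hc; rewrite expnD.
have a2 : (2 <= 2 ^ r)%N by rewrite -{1}(expn1 2) leq_exp2l.
have b2 : (2 <= 2 ^ c)%N by rewrite -{1}(expn1 2) leq_exp2l.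
nia.
Qed.

Unset Implicit Arguments.

Theorem lemma4 (R : rcfType) (r c K T : nat) (W : finType)
  (A : qalg R (r + c) W T) (eps : R) :
  (1 <= r)%N -> (1 <= c)%N -> (1 <= K <= 2 ^ minn r c)%N ->
  eps = avg_succ_prob K A -> 0 < eps ->
  eps <= 8 * (T.+1)%:R ^+ 2 * K%:R / (2 ^ minn r c)%:R.
Proof.
move=> hr hc /andP [K0 Km] -> _.
set m := (2 ^ minn r c)%N.
have hp : (m <= #|S1 r c|)%N.
  by apply: leq_trans (cardS1_ge r c); rewrite leq_exp2l // geq_minl.
have hq : (m <= #|S2 r c|)%N.
  by apply: leq_trans (cardS2_ge r c); rewrite leq_exp2l // geq_minr.
have hp' := cardS1_le r c.
have hq' := cardS2_le r c.
have hN := cardN r c.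
have hpq := @pow_sum r c hr hc.
set Z := ((2 ^ (r + c) + K) - (#|S1 r c| + #|S2 r c|))%N.
have hZ : forall f : {perm bs (r + c)}, numXpairs f == K ->
    #|[set z | ~~ inX1 z && ~~ inX2 (f z)]| = Z.
  move=> f /eqP hf; have := cnt_Z f; rewrite hN hf /Z => <-; by rewrite -addnA addnK.
have Zpos : (0 < Z)%N by rewrite /Z; lia.
have m0 : (0 < m)%N by rewrite expn_gt0.
rewrite /avg_succ_prob.
set S := \sum_(f | _) _.
set d := #|[set f | _]|.
set d1 := #|[set f : {perm bs (r + c)} | numXpairs f == K.-1]|.
have S0 : 0 <= S by apply: sumr_ge0 => f _; apply: sumr_ge0 => b _; apply: sqnorm_ge0.
have mR : (0 : R) < m%:R by rewrite ltr0n.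
case: (posnP d) => [d0|dpos].
  rewrite d0 invr0 mulr0; apply: mulr_ge0 => //; rewrite ?invr_ge0 ?ler0n //.
  by rewrite !mulr_ge0 ?ler0n // exprn_ge0 ?ler0n.
have dR : (0 : R) < d%:R by rewrite ltr0n.
rewrite ler_pdivrMr // mulrAC ler_pdivlMr //.
case: (leqP m (8 * K * T.+1 ^ 2)) => htriv.
  have Sd : S <= d%:R.
    rewrite /S -[d%:R]mulr1 /d -sum_if_const big_mkcond /=; apply: ler_sum => f _; case: ifP => // _; exact: succ_le1.
  have : (m%:R : R) <= 8 * (T.+1)%:R ^+ 2 * K%:R.
    by rewrite -natrX -!natrM ler_nat mulnAC.
  move=> h; apply: (le_trans (ler_wpM2r (ler0n _ m) Sd)).
  by rewrite [X in _ <= X]mulrC ler_wpM2l // ltW.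
have hM := step_main A K0 hZ.
have hC := step_count R K0 hZ.
have hKm : (K < m)%N.
  apply: leq_ltn_trans htriv; rewrite mulnAC leq_pmull //.
have Kp : (K.-1 <= #|S1 r c|)%N by lia.
have Kq : (K.-1 <= #|S2 r c|)%N by lia.
rewrite (natrB R Kp) (natrB R Kq) in hC.
have Kpr : ((K.-1)%:R : R) = K%:R - 1.
  by rewrite -[in RHS](prednK K0) -addn1 natrD addrK.
rewrite Kpr in hC.
have T1 : ((T.+1)%:R : R) = T%:R + 1 by rewrite -addn1 natrD.
rewrite T1.
set M := maxn #|S1 r c| #|S2 r c|.
have hPM : (#|S1 r c|%:R : R) <= M%:R by rewrite ler_nat leq_maxl.
have hQM : (#|S2 r c|%:R : R) <= M%:R by rewrite ler_nat leq_maxr.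
have hPQ : (#|S1 r c|%:R : R) = M%:R \/ (#|S2 r c|%:R : R) = M%:R.
  rewrite /M; case: (leqP #|S1 r c| #|S2 r c|) => h.
    by right; congr (_%:R); apply/esym/maxn_idPr.
  by left; congr (_%:R); apply/esym/maxn_idPl; apply: ltnW.
have hmP : (m%:R : R) <= #|S1 r c|%:R by rewrite ler_nat.
have hmQ : (m%:R : R) <= #|S2 r c|%:R by rewrite ler_nat.
have htr : 8 * K%:R * (T%:R + 1) ^+ 2 < (m%:R : R).
  by rewrite -T1 -natrX -!natrM ltr_nat.
have K1 : (1 : R) <= K%:R by rewrite ler1n.
have ar := @arith R _ _ _ _ _ _ hmP hmQ hPM hQM hPQ htr K1 (ler0n _ T).
have hmpos : (K%:R : R) < m%:R by rewrite ltr_nat.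
have apos : 0 < (#|S2 r c|%:R - (K%:R - 1)) * (#|S1 r c|%:R - (K%:R - 1)) :> R.
  apply: mulr_gt0; lra.
have Zr : (0 : R) < Z%:R by rewrite ltr0n.
have := @final_alg R _ _ _ _ _ _ _ _ _ Zr apos mR (ler0n _ _) (ler0n _ _) (ler0n _ _) hM hC. move=> fa.
apply: fa; move: ar; rewrite /M.
have -> : #|S2 r c|%:R - (K%:R - 1) = #|S2 r c|%:R - K%:R + 1 :> R by ring.
by have -> : #|S1 r c|%:R - (K%:R - 1) = #|S1 r c|%:R - K%:R + 1 :> R by ring.
Qed.
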